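(* Let $\mu$ and $\lambda$ be constants, and let $r_\mu:=1/\sqrt{-\mu}$ if $\mu<0$ and $r_\mu:=+\infty$ if $\mu\ge 0$. On the ball $\mathbb{B}^n(r_\mu)=\{x\in\mathbb{R}^n:|x|<r_\mu\}$ consider the Riemannian metric $$\bar\alpha=\frac{\sqrt{(1+\mu|x|^2)|y|^2-\mu\langle x,y\rangle^2}}{(1+\mu|x|^2)^{3/4}}$$ and the $1$-form $$\bar\beta=\frac{\lambda\langle x,y\rangle}{(1+\mu|x|^2)^{5/4}}.$$ Then $\bar\alpha$ is dually flat on $\mathbb{B}^n(r_\mu)$, and $\bar\beta$ is dually related with respect to $\bar\alpha$.
   Context: $|\cdot|$ and $\langle\cdot,\cdot\rangle$ are the Euclidean norm and inner product; standard coordinates $x=(x^i)$, $y=(y^i)$ are used. A Riemannian metric $\alpha=\sqrt{a_{ij}(x)y^iy^j}$ on an open set $U\subseteq\mathbb{R}^n$ is dually flat if $[\alpha^2]_{x^ky^l}y^k-2[\alpha^2]_{x^l}=0$; equivalently its spray coefficients $G^i=\frac12\Gamma^i{}_{jk}y^jy^k$ satisfy $G^i=2\theta\,y^i+\alpha^2\theta^i$ for some $1$-form $\theta=\theta_iy^i$ on $U$, where $\theta^i:=a^{ij}\theta_j$ (this $\theta$ is uniquely determined by $G^i$). Given such a dually flat $\alpha$ with this $\theta$, a $1$-form $\beta=b_iy^i$ on $U$ is called dually related with respect to $\alpha$ if $b_{i|j}=2\theta_ib_j+c(x)a_{ij}$ for some scalar function $c(x)$ on $U$, where $b_{i|j}$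 denotes the covariant derivative of $\beta$ with respect to $\alpha$. *)

(* Defs.v *)
From HB Require Import structures.
From mathcomp Require Import all_boot all_order all_algebra.
From mathcomp Require Import all_classical all_reals all_analysis.
Import Order.TTheory GRing.Theory Num.Theory.
Import numFieldNormedType.Exports.
Local Open Scope ring_scope.

Definition dotp {R : realType} {n : nat} (x y : 'rV[R]_n) : R :=
  \sum_(i < n) x 0 i * y 0 i.
Definition sqn {R : realType} {n : nat} (x : 'rV[R]_n) : R := dotp x x.

Definition evec {R : realType} {n : nat} (k : 'I_n) : 'rV[R]_n := delta_mx 0 k.
Definition pd {R : realType} {n : nat} (f : 'rV[R]_n -> R) (k : 'I_n)
  (x : 'rV[R]_n) : R := 'D_(evec k) f x.

(* A Riemannian metric alpha = sqrt(a_ij(x) y^i y^j) is given by its matrix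
   a : x |-> (a_ij(x)); sqform a x y = alpha^2 = a_ij(x) y^i y^j. *)
Definition sqform {R : realType} {n : nat} (a : 'rV[R]_n -> 'M[R]_n)
  (x y : 'rV[R]_n) : R :=
  \sum_(i < n) \sum_(j < n) a x i j * y 0 i * y 0 j.

Definition riemannian_on {R : realType} {n : nat} (U : set 'rV[R]_n)
  (a : 'rV[R]_n -> 'M[R]_n) : Prop :=
  forall x, U x ->
    (forall i j, a x i j = a x j i) /\
    (forall y : 'rV[R]_n, y != 0 -> 0 < sqform a x y).

Definition dually_flat {R : realType} {n : nat} (U : set 'rV[R]_n)
  (a : 'rV[R]_n -> 'M[R]_n) : Prop :=
  forall x, U x -> forall (y : 'rV[R]_n) (l : 'I_n),
    \sum_(k < n) pd (fun y' => pd (fun x' => sqform a x' y') k x) l y * y 0 k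
    - 2 * pd (fun x' => sqform a x' y) l x = 0.

Definition ainv {R : realType} {n : nat} (a : 'rV[R]_n -> 'M[R]_n)
  (x : 'rV[R]_n) : 'M[R]_n := invmx (a x).

Definition christ {R : realType} {n : nat} (a : 'rV[R]_n -> 'M[R]_n)
  (x : 'rV[R]_n) (i j k : 'I_n) : R :=
  2^-1 * \sum_(l < n) ainv a x i l *
    (pd (fun z => a z l k) j x + pd (fun z => a z l j) k x
     - pd (fun z => a z j k) l x).

Definition spray {R : realType} {n : nat} (a : 'rV[R]_n -> 'M[R]_n)
  (x y : 'rV[R]_n) (i : 'I_n) : R :=
  2^-1 * \sum_(j < n) \sum_(k < n) christ a x i j k * y 0 j * y 0 k.

Definition raise {R : realType} {n : nat} (a : 'rV[R]_n -> 'M[R]_n)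
  (th : 'rV[R]_n -> 'rV[R]_n) (x : 'rV[R]_n) (i : 'I_n) : R :=
  \sum_(j < n) ainv a x i j * th x 0 j.

Definition covd {R : realType} {n : nat} (a : 'rV[R]_n -> 'M[R]_n)
  (b : 'rV[R]_n -> 'rV[R]_n) (x : 'rV[R]_n) (i j : 'I_n) : R :=
  pd (fun z => b z 0 i) j x - \sum_(k < n) b x 0 k * christ a x k i j.

(* beta is dually related w.r.t. alpha on U: with theta the (unique) 1-form
   such that G^i = 2 theta y^i + alpha^2 theta^i, there is c(x) with
   b_{i|j} = 2 theta_i b_j + c(x) a_ij. *)
Definition dually_related {R : realType} {n : nat} (U : set 'rV[R]_n)
  (a : 'rV[R]_n -> 'M[R]_n) (b : 'rV[R]_n -> 'rV[R]_n) : Prop :=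
  exists (th : 'rV[R]_n -> 'rV[R]_n) (c : 'rV[R]_n -> R),
    (forall x, U x -> forall (y : 'rV[R]_n) (i : 'I_n),
        spray a x y i = 2 * dotp (th x) y * y 0 i + sqform a x y * raise a th x i) /\
    (forall x, U x -> forall i j : 'I_n,
        covd a b x i j = 2 * th x 0 i * b x 0 j + c x * a x i j).

Definition ball_mu {R : realType} {n : nat} (mu : R) : set 'rV[R]_n :=
  [set x | (0 <= mu) \/ (mu < 0 /\ Num.sqrt (sqn x) < 1 / Num.sqrt (- mu))].

Definition alpha_bar {R : realType} {n : nat} (mu : R) (x y : 'rV[R]_n) : R :=
  Num.sqrt ((1 + mu * sqn x) * sqn y - mu * (dotp x y) ^+ 2)
  / powR (1 + mu * sqn x) (3 / 4).

(* Its matrix: alpha_bar^2 = a_ij y^i y^j with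
   a_ij = ((1 + mu|x|^2) delta_ij - mu x_i x_j) / (1 + mu|x|^2)^{3/2}. *)
Definition abar {R : realType} {n : nat} (mu : R) (x : 'rV[R]_n) : 'M[R]_n :=
  \matrix_(i, j) (((1 + mu * sqn x) * (i == j)%:R - mu * x 0 i * x 0 j)
                  / powR (1 + mu * sqn x) (3 / 2)).

Definition bbar {R : realType} {n : nat} (lam mu : R) (x : 'rV[R]_n) : 'rV[R]_n :=
  (lam / powR (1 + mu * sqn x) (5 / 4)) *: x.

(* Main.v *)
Require Import Defs.
From HB Require Import structures.
From mathcomp Require Import all_boot all_order all_algebra.
From mathcomp Require Import all_classical all_reals all_analysis.
From mathcomp Require Import ring lra.
Import Order.TTheory GRing.Theory Num.Theory.
Import numFieldNormedType.Exports.
Local Open Scope ring_scope.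

Lemma line_is_derive {R : realType} {n : nat} (f : 'rV[R]_n -> R) x v d :
  is_derive x v f d <-> is_derive (0:R) (1:R) (fun t => f (t *: v + x)) d.
Proof.
have E : (fun h : R => h^-1 *: ((f \o shift x) (h *: v) - f x)) =
  (fun h : R => h^-1 *: (((fun t => f (t *: v + x)) \o shift 0) (h *: 1) - (fun t => f (t *: v + x)) 0)).
  by apply/funext => h /=; rewrite addr0 scale0r add0r [_%:A]mulr1.
split=> -[H1 H2]; split.
- exact: (derivable1P f x v).1.
- by rewrite -H2 /derive -E.
- exact: (derivable1P f x v).2.
- by rewrite -H2 /derive E.
Qed.

Lemma scE {R : realType} (a b : R) : @GRing.scale _ (numFieldNormedType.NumField_sort__canonical__GRing_LSemiModule R) a b = a * b. Proof. by []. Qed.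

Global Instance is_derive_coord {R : realType} {n : nat} (x v : 'rV[R]_n) i :
  is_derive x v (fun z : 'rV[R]_n => z 0 i) (v 0 i).
Proof.
apply/line_is_derive.
have -> : (fun t : R => (t *: v + x) 0 i) = (fun t => t * v 0 i + x 0 i).
  by apply/funext => t; rewrite !mxE.
apply: is_derive_eq.
by rewrite scaler0 add0r addr0 [_%:A]mulr1.
Qed.

Lemma dotpC {R : realType} {n : nat} (x y : 'rV[R]_n) : dotp x y = dotp y x.
Proof. by apply: eq_bigr => i _; rewrite mulrC. Qed.

Lemma dotpDl {R : realType} {n : nat} (x y z : 'rV[R]_n) : dotp (x + y) z = dotp x z + dotp y z.
Proof. by rewrite /dotp -big_split; apply: eq_bigr => i _; rewrite !mxE mulrDl. Qed.

Lemma dotpZl {R : realType} {n : nat} (a : R) (x z : 'rV[R]_n) : dotp (a *: x) z = a * dotp x z.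
Proof. by rewrite /dotp mulr_sumr; apply: eq_bigr => i _; rewrite !mxE mulrA. Qed.

Lemma dotpDr {R : realType} {n : nat} (x y z : 'rV[R]_n) : dotp z (x + y) = dotp z x + dotp z y.
Proof. by rewrite !(dotpC z) dotpDl. Qed.

Lemma dotpZr {R : realType} {n : nat} (a : R) (x z : 'rV[R]_n) : dotp z (a *: x) = a * dotp z x.
Proof. by rewrite !(dotpC z) dotpZl. Qed.

Global Instance is_derive_dotpl {R : realType} {n : nat} (x v y : 'rV[R]_n) :
  is_derive x v (fun z : 'rV[R]_n => dotp z y) (dotp v y).
Proof.
apply/line_is_derive.
have -> : (fun t : R => dotp (t *: v + x) y) = (fun t => t * dotp v y + dotp x y).
  by apply/funext => t; rewrite dotpDl dotpZl.
apply: is_derive_eq.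
by rewrite scaler0 add0r addr0 [_%:A]mulr1.
Qed.

Global Instance is_derive_dotpr {R : realType} {n : nat} (x v y : 'rV[R]_n) :
  is_derive x v (fun z : 'rV[R]_n => dotp y z) (dotp y v).
Proof.
have -> : (fun z : 'rV[R]_n => dotp y z) = (fun z => dotp z y).
  by apply/funext => z; rewrite dotpC.
by rewrite dotpC; apply: is_derive_dotpl.
Qed.

Global Instance is_derive_sqn {R : realType} {n : nat} (x v : 'rV[R]_n) :
  is_derive x v (fun z : 'rV[R]_n => sqn z) (2 * dotp x v).
Proof.
apply/line_is_derive.
have -> : (fun t : R => sqn (t *: v + x)) = (fun t => t ^+ 2 * sqn v + t * (2 * dotp x v) + sqn x).
  apply/funext => t; rewrite /sqn !(dotpDl, dotpDr, dotpZl, dotpZr) (dotpC v x); ring.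
apply: is_derive_eq.
rewrite ?scE; ring.
Qed.

Lemma is_derive_powR_comp {R : realType} {n : nat} (g : 'rV[R]_n -> R) x v dg r :
  0 < g x -> is_derive x v g dg ->
  is_derive x v (fun z => powR (g z) r) (r * powR (g x) (r - 1) * dg).
Proof.
move=> gx /line_is_derive H; apply/line_is_derive.
have gx' : 0 < (fun t : R => g (t *: v + x)) 0 by rewrite /= scale0r add0r.
have H2 := @is_derive1_powR R r _ gx'.
have := is_derive1_comp H2 H.
by rewrite /= scale0r add0r.
Qed.

Definition Pm {R : realType} {n : nat} (mu : R) (z : 'rV[R]_n) : R := 1 + mu * sqn z.

Lemma sum_delta_l {R : realType} {n : nat} (k : 'I_n) (F : 'I_n -> R) :
  \sum_(l < n) (l == k)%:R * F l = F k.
Proof.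
rewrite (bigD1 k) //= eqxx mul1r big1 ?addr0 // => l /negbTE ->.
by rewrite mul0r.
Qed.

Lemma sum_delta_r {R : realType} {n : nat} (k : 'I_n) (F : 'I_n -> R) :
  \sum_(l < n) (k == l)%:R * F l = F k.
Proof. by rewrite -(sum_delta_l k F); apply: eq_bigr => l _; rewrite eq_sym. Qed.

Lemma sum_lin2 {R : realType} {n : nat} (a b : R) (F G : 'I_n -> R) :
  \sum_(l < n) (a * F l + b * G l) = a * \sum_(l < n) F l + b * \sum_(l < n) G l.
Proof. by rewrite big_split -!mulr_sumr. Qed.

Lemma sum_lin3 {R : realType} {n : nat} (a b c : R) (F G H : 'I_n -> R) :
  \sum_(l < n) (a * F l + b * G l + c * H l) =
  a * \sum_(l < n) F l + b * \sum_(l < n) G l + c * \sum_(l < n) H l.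
Proof. by rewrite !big_split -!mulr_sumr. Qed.

Lemma sum_lin4 {R : realType} {n : nat} (a b c d : R) (F G H K : 'I_n -> R) :
  \sum_(l < n) (a * F l + b * G l + c * H l + d * K l) =
  a * \sum_(l < n) F l + b * \sum_(l < n) G l + c * \sum_(l < n) H l + d * \sum_(l < n) K l.
Proof. by rewrite !big_split -!mulr_sumr. Qed.

Lemma sum2_lin2 {R : realType} {n : nat} (a b : R) (F G : 'I_n -> 'I_n -> R) :
  \sum_(i < n) \sum_(j < n) (a * F i j + b * G i j) =
  a * \sum_(i < n) \sum_(j < n) F i j + b * \sum_(i < n) \sum_(j < n) G i j.
Proof.
rewrite -sum_lin2; apply: eq_bigr => i _; exact: sum_lin2.
Qed.

Lemma sum2_lin4 {R : realType} {n : nat} (a b c d : R) (F G H K : 'I_n -> 'I_n -> R) :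
  \sum_(i < n) \sum_(j < n) (a * F i j + b * G i j + c * H i j + d * K i j) =
  a * \sum_(i < n) \sum_(j < n) F i j + b * \sum_(i < n) \sum_(j < n) G i j
  + c * \sum_(i < n) \sum_(j < n) H i j + d * \sum_(i < n) \sum_(j < n) K i j.
Proof.
rewrite -sum_lin4; apply: eq_bigr => i _; exact: sum_lin4.
Qed.

Lemma dotp_sq {R : realType} {n : nat} (x y : 'rV[R]_n) :
  \sum_(i < n) \sum_(j < n) (x 0 i * y 0 i) * (x 0 j * y 0 j) = dotp x y ^+ 2.
Proof.
rewrite expr2 /dotp big_distrl /=; apply: eq_bigr => i _.
by rewrite mulr_sumr.
Qed.

Lemma sqform_abar {R : realType} {n : nat} (mu : R) (x y : 'rV[R]_n) :
  sqform (abar mu) x y = (Pm mu x * sqn y - mu * dotp x y ^+ 2) / powR (Pm mu x) (3/2).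
Proof.
rewrite /sqform.
set A := powR _ _.
rewrite (eq_bigr (fun i => \sum_(j < n) ((Pm mu x / A) * ((i == j)%:R * (y 0 i * y 0 j))
   + (- mu / A) * ((x 0 i * y 0 i) * (x 0 j * y 0 j))))); last first.
  move=> i _; apply: eq_bigr => j _; rewrite !mxE /Pm; ring.
rewrite sum2_lin2 dotp_sq.
rewrite (eq_bigr (fun i => y 0 i * y 0 i)); last first.
  by move=> i _; rewrite sum_delta_r.
rewrite /sqn /dotp; ring.
Qed.

Lemma sqn_ge0 {R : realType} {n : nat} (x : 'rV[R]_n) : 0 <= sqn x.
Proof. by apply: sumr_ge0 => i _; rewrite -expr2 sqr_ge0. Qed.

Lemma sqn_gt0 {R : realType} {n : nat} (y : 'rV[R]_n) : y != 0 -> 0 < sqn y.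
Proof.
move=> y0.
have [i yi] : exists i, y 0 i != 0.
  apply/existsP; apply: contraR y0 => /existsPn H; apply/eqP/matrixP => a b.
  by rewrite (ord1 a) mxE; apply/eqP; move: (H b); rewrite negbK.
rewrite /sqn /dotp (bigD1 i) //=.
apply: ltr_pwDl; first by rewrite -expr2 lt_def sqr_ge0 andbT sqrf_eq0 yi.
by apply: sumr_ge0 => j _; rewrite -expr2 sqr_ge0.
Qed.

Lemma ball_Pm {R : realType} {n : nat} (mu : R) (x : 'rV[R]_n) :
  ball_mu mu x -> 0 < Pm mu x.
Proof.
have S0 := sqn_ge0 x.
rewrite /Pm; case=> [mu0|[mu0 H]].
  have : 0 <= mu * sqn x by apply: mulr_ge0.
  lra.
have m0 : 0 < - mu by rewrite oppr_gt0.
have sm0 : 0 < Num.sqrt (- mu) by rewrite sqrtr_gt0.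
move: H; rewrite ltr_pdivlMr // -sqrtrM // -sqrtr1 ltr_sqrt ?ltr01 //.
rewrite sqrtr1 mulrN mulrC => h; lra.
Qed.

Lemma cauchy_schwarz {R : realType} {n : nat} (x y : 'rV[R]_n) :
  dotp x y ^+ 2 <= sqn x * sqn y.
Proof.
have [y0|yn0] := eqVneq y 0.
  have -> : dotp x y = 0 by rewrite /dotp big1 // => i _; rewrite y0 mxE mulr0.
  by rewrite expr0n /= mulr_ge0 // sqn_ge0.
have Y := @sqn_gt0 _ _ y yn0.
have H := sqn_ge0 (sqn y *: x + (- dotp x y) *: y).
move: H Y; rewrite /sqn !(dotpDl, dotpDr, dotpZl, dotpZr) (dotpC y x).
set a := dotp x x; set b := dotp y y; set c := dotp x y => H Y.
have : 0 <= b * (a * b - c ^+ 2) by move: H; congr (_ <= _); ring.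
rewrite pmulr_rge0 // subr_ge0 mulrC //.
Qed.

Lemma part1 {R : realType} {n : nat} (mu : R) (x : 'rV[R]_n) :
  ball_mu mu x -> forall y : 'rV[R]_n,
      alpha_bar mu x y = Num.sqrt (sqform (abar mu) x y).
Proof.
move=> /ball_Pm Px y; rewrite sqform_abar /alpha_bar -/(Pm mu x).
have C0 : 0 < powR (Pm mu x) (3/4) by apply: powR_gt0.
have -> : powR (Pm mu x) (3/2) = powR (Pm mu x) (3/4) ^+ 2.
  rewrite -powR_mulrn ?powR_ge0 // -powRrM; congr powR; rewrite -[2%:R]/(2 : R). by field.
rewrite [in RHS]mulrC sqrtrM ?invr_ge0 ?sqr_ge0 // sqrtrV ?sqr_ge0 // sqrtr_sqr gtr0_norm //.
by rewrite mulrC.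
Qed.

Lemma part2 {R : realType} {n : nat} (mu : R) :
  riemannian_on (@ball_mu R n mu) (abar mu).
Proof.
move=> x /ball_Pm Px; split.
  move=> i j; rewrite !mxE eq_sym; congr (_ / _ ); congr (_ - _); rewrite -!mulrA; congr (_ * _); exact: mulrC.
move=> y y0; rewrite sqform_abar; apply: divr_gt0; last exact: powR_gt0.
have Y := @sqn_gt0 _ _ y y0.
have CS := cauchy_schwarz x y.
have S0 := sqn_ge0 x.
have s0 : 0 <= dotp x y ^+ 2 by apply: sqr_ge0.
rewrite /Pm; have [mu0|mu0] := leP 0 mu.
  have : 0 <= mu * (sqn x * sqn y - dotp x y ^+ 2) by apply: mulr_ge0; lra.
  move=> h; nra.
have : 0 <= - mu * dotp x y ^+ 2 by apply: mulr_ge0; lra.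
move: Px; rewrite /Pm => Px h; nra.
Qed.

Global Instance is_derive_Pm {R : realType} {n : nat} (mu : R) (x v : 'rV[R]_n) :
  is_derive x v (fun z => Pm mu z) (mu * (2 * dotp x v)).
Proof. rewrite /Pm; apply: is_derive_eq; rewrite ?scE; ring. Qed.

Lemma pd_of {R : realType} {n : nat} (f : 'rV[R]_n -> R) k x d :
  is_derive x (evec k) f d -> pd f k x = d.
Proof. by move=> H; rewrite /pd derive_val. Qed.

Lemma evecE {R : realType} {n : nat} (k l : 'I_n) : (evec k : 'rV[R]_n) 0 l = (l == k)%:R.
Proof. by rewrite /evec mxE eqxx. Qed.

Lemma dotp_evecr {R : realType} {n : nat} (x : 'rV[R]_n) k : dotp x (evec k) = x 0 k.
Proof.
rewrite /dotp (eq_bigr (fun l => (l == k)%:R * x 0 l)) ?sum_delta_l //.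
by move=> l _; rewrite evecE mulrC.
Qed.

Lemma dotp_evecl {R : realType} {n : nat} (x : 'rV[R]_n) k : dotp (evec k) x = x 0 k.
Proof. by rewrite dotpC dotp_evecr. Qed.

Lemma powR_m1 {R : realType} (p r : R) : 0 < p -> powR p (r - 1) = powR p r / p.
Proof. move=> p0; rewrite powRB; last by apply/implyP => _; rewrite gt_eqF. by rewrite powRr1 // ltW. Qed.

Lemma pd_abar {R : realType} {n : nat} (mu : R) (x : 'rV[R]_n) l k j :
  0 < Pm mu x -> pd (fun z => abar mu z l k) j x =
  (2 * mu * x 0 j * (l == k)%:R - mu * ((l == j)%:R * x 0 k + x 0 l * (k == j)%:R))
     / powR (Pm mu x) (3/2)
  + (Pm mu x * (l == k)%:R - mu * x 0 l * x 0 k) *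
    (- (3/2) * ((powR (Pm mu x) (3/2))^-1 / Pm mu x)) * (2 * mu * x 0 j).
Proof.
move=> Px.
have -> : (fun z => abar mu z l k) =
   (fun z => (Pm mu z * (l == k)%:R - mu * z 0 l * z 0 k) * powR (Pm mu z) (- (3/2))).
  by apply/funext => z; rewrite mxE powRN.
have hp := @is_derive_powR_comp _ _ (fun z => Pm mu z) x (evec j) _ (- (3/2)) Px (is_derive_Pm mu x (evec j)).
apply: pd_of; apply: is_derive_eq.
rewrite ?scE !evecE !dotp_evecr powR_m1 // !powRN.
field.
by rewrite !gt_eqF ?powR_gt0.
Qed.

Lemma pd_sqform {R : realType} {n : nat} (mu : R) (x y : 'rV[R]_n) k :
  0 < Pm mu x -> pd (fun x' => sqform (abar mu) x' y) k x =
  (mu * (2 * x 0 k) * sqn y - mu * (2 * dotp x y * y 0 k)) / powR (Pm mu x) (3/2)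
  + (Pm mu x * sqn y - mu * dotp x y ^+ 2) *
    (- (3/2) * ((powR (Pm mu x) (3/2))^-1 / Pm mu x)) * (mu * (2 * x 0 k)).
Proof.
move=> Px.
have -> : (fun x' => sqform (abar mu) x' y) =
   (fun z => (Pm mu z * sqn y - mu * dotp z y ^+ 2) * powR (Pm mu z) (- (3/2))).
  by apply/funext => z; rewrite sqform_abar powRN.
have hp := @is_derive_powR_comp _ _ (fun z => Pm mu z) x (evec k) _ (- (3/2)) Px (is_derive_Pm mu x (evec k)).
apply: pd_of; apply: is_derive_eq.
rewrite ?scE ?dotp_evecr ?dotp_evecl powR_m1 // !powRN.
field.
by rewrite !gt_eqF ?powR_gt0.
Qed.

Lemma pd2_sqform {R : realType} {n : nat} (mu : R) (x y : 'rV[R]_n) k l :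
  0 < Pm mu x ->
  pd (fun y' => pd (fun x' => sqform (abar mu) x' y') k x) l y =
  (mu * (2 * x 0 k) * (2 * y 0 l) - mu * (2 * (x 0 l * y 0 k + dotp x y * (k == l)%:R)))
      / powR (Pm mu x) (3/2)
  + (Pm mu x * (2 * y 0 l) - mu * (2 * dotp x y * x 0 l)) *
    (- (3/2) * ((powR (Pm mu x) (3/2))^-1 / Pm mu x)) * (mu * (2 * x 0 k)).
Proof.
move=> Px.
have -> : (fun y' => pd (fun x' => sqform (abar mu) x' y') k x) =
   (fun y' => (mu * (2 * x 0 k) * sqn y' - mu * (2 * dotp x y' * y' 0 k)) / powR (Pm mu x) (3/2)
  + (Pm mu x * sqn y' - mu * dotp x y' ^+ 2) *
    (- (3/2) * ((powR (Pm mu x) (3/2))^-1 / Pm mu x)) * (mu * (2 * x 0 k))).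
  by apply/funext => z; rewrite pd_sqform.
apply: pd_of; apply: is_derive_eq.
rewrite ?scE ?dotp_evecr ?dotp_evecl ?evecE.
field.
by rewrite !gt_eqF ?powR_gt0.
Qed.

Lemma part3 {R : realType} {n : nat} (mu : R) :
  dually_flat (@ball_mu R n mu) (abar mu).
Proof.
move=> x /ball_Pm Px y l.
rewrite pd_sqform //.
set A := powR (Pm mu x) (3/2).
set P := Pm mu x.
set s := dotp x y.
rewrite (eq_bigr (fun k =>
   (4 * mu * y 0 l / A + (2 * P * y 0 l - 2 * mu * s * x 0 l) * (- (3/2) * (A^-1 / P)) * (2 * mu))
     * (x 0 k * y 0 k)
   + (- 2 * mu * x 0 l / A) * (y 0 k * y 0 k)
   + (- 2 * mu * s / A) * ((k == l)%:R * y 0 k))); last first.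
  move=> k _; rewrite pd2_sqform // -/A -/P -/s.
  field.
  by rewrite /A /P !gt_eqF ?powR_gt0.
rewrite sum_lin3 sum_delta_l -/(dotp x y) -/(dotp y y) -/(sqn y) -/s.
field.
by rewrite /A /P !gt_eqF ?powR_gt0.
Qed.

Definition Ainv {R : realType} {n : nat} (mu : R) (x : 'rV[R]_n) : 'M[R]_n :=
  \matrix_(i, j) (powR (Pm mu x) (3/2) / Pm mu x * ((i == j)%:R + mu * x 0 i * x 0 j)).

Lemma abar_Ainv {R : realType} {n : nat} (mu : R) (x : 'rV[R]_n) :
  0 < Pm mu x -> abar mu x *m Ainv mu x = 1%:M.
Proof.
move=> Px; apply/matrixP => i j; rewrite !mxE.
set A := powR (Pm mu x) (3/2).
set P := Pm mu x.
rewrite (eq_bigr (fun l => 1 * ((i == l)%:R * (l == j)%:R) + (mu * x 0 j) * ((i == l)%:R * x 0 l)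
   + (- mu * x 0 i / P) * ((l == j)%:R * x 0 l) + (- mu ^+ 2 * x 0 i * x 0 j / P) * (x 0 l * x 0 l)));
  last first.
  move=> l _; rewrite !mxE /P /Pm. field.
  by rewrite /A /P !gt_eqF ?powR_gt0.
rewrite sum_lin4 sum_delta_r sum_delta_r sum_delta_l -/(dotp x x) -/(sqn x).
have -> : P = 1 + mu * sqn x by [].
field.
by rewrite -/P gt_eqF.
Qed.

Lemma ainv_abar {R : realType} {n : nat} (mu : R) (x : 'rV[R]_n) :
  0 < Pm mu x -> ainv (abar mu) x = Ainv mu x.
Proof.
move=> Px; have H := @abar_Ainv _ _ mu x Px.
have [U _] := mulmx1_unit H.
by rewrite /ainv -[invmx _]mulmx1 -H mulmxA mulVmx // mul1mx.
Qed.

Lemma sum_lin6 {R : realType} {n : nat} (a b c d e f : R) (F G H K L M : 'I_n -> R) :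
  \sum_(l < n) (a * F l + b * G l + c * H l + d * K l + e * L l + f * M l) =
  a * \sum_(l < n) F l + b * \sum_(l < n) G l + c * \sum_(l < n) H l + d * \sum_(l < n) K l
  + e * \sum_(l < n) L l + f * \sum_(l < n) M l.
Proof. by rewrite !big_split -!mulr_sumr. Qed.

Lemma christ_abar {R : realType} {n : nat} (mu : R) (x : 'rV[R]_n) i j k :
  0 < Pm mu x ->
  christ (abar mu) x i j k =
  2^-1 * (- mu * (j == k)%:R * x 0 i
          - mu / Pm mu x * ((i == k)%:R * x 0 j + (i == j)%:R * x 0 k)
          + mu ^+ 2 / Pm mu x * x 0 i * x 0 j * x 0 k).
Proof.
move=> Px.
rewrite /christ ainv_abar //.
set A := powR (Pm mu x) (3/2).
set P := Pm mu x.
pose G := A / P.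
pose al := - mu * x 0 j / A.
pose be := - mu * x 0 k / A.
pose ga := - mu * (j == k)%:R / A + 3 * mu ^+ 2 * x 0 j * x 0 k / (A * P).
rewrite (eq_bigr (fun l => (G * al) * ((i == l)%:R * (l == k)%:R)
   + (G * be) * ((i == l)%:R * (l == j)%:R)
   + (G * ga) * ((i == l)%:R * x 0 l)
   + (G * mu * x 0 i * al) * ((l == k)%:R * x 0 l)
   + (G * mu * x 0 i * be) * ((l == j)%:R * x 0 l)
   + (G * mu * x 0 i * ga) * (x 0 l * x 0 l))); last first.
  move=> l _; rewrite mxE !pd_abar // -/A -/P.
  rewrite [(k == j)]eq_sym [(j == l)]eq_sym [(k == l)]eq_sym.
  rewrite /G /al /be /ga /P /Pm; field.
  by rewrite -/(Pm mu x) /A !gt_eqF ?powR_gt0.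
rewrite sum_lin6 !sum_delta_r !sum_delta_l -/(dotp x x) -/(sqn x).
rewrite /G /al /be /ga /P /Pm; field.
by rewrite -/(Pm mu x) /A !gt_eqF ?powR_gt0.
Qed.

Lemma sumS1 {R : realType} {n : nat} (y : 'rV[R]_n) :
  \sum_(j < n) \sum_(k < n) (j == k)%:R * (y 0 j * y 0 k) = sqn y.
Proof. by apply: eq_bigr => j _; rewrite sum_delta_r. Qed.

Lemma sumS2 {R : realType} {n : nat} (x y : 'rV[R]_n) i :
  \sum_(j < n) \sum_(k < n) (i == k)%:R * ((x 0 j * y 0 j) * y 0 k) = dotp x y * y 0 i.
Proof.
rewrite /dotp mulr_suml; apply: eq_bigr => j _; by rewrite sum_delta_r.
Qed.

Lemma sumS3 {R : realType} {n : nat} (x y : 'rV[R]_n) i :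
  \sum_(j < n) \sum_(k < n) (i == j)%:R * (y 0 j * (x 0 k * y 0 k)) = y 0 i * dotp x y.
Proof.
rewrite (eq_bigr (fun j => (i == j)%:R * (y 0 j * dotp x y))) ?sum_delta_r //.
by move=> j _; rewrite /dotp !mulr_sumr.
Qed.

Definition thf {R : realType} {n : nat} (mu : R) (z : 'rV[R]_n) : 'rV[R]_n :=
  (- mu / (4 * Pm mu z)) *: z.

Lemma spray_abar {R : realType} {n : nat} (mu : R) (x y : 'rV[R]_n) i :
  0 < Pm mu x ->
  spray (abar mu) x y i = 2 * dotp (thf mu x) y * y 0 i
     + sqform (abar mu) x y * raise (abar mu) (thf mu) x i.
Proof.
move=> Px.
rewrite /spray.
rewrite (eq_bigr (fun j => \sum_(k < n)
   ((2^-1 * (- mu * x 0 i)) * ((j == k)%:R * (y 0 j * y 0 k))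
   + (2^-1 * (- mu / Pm mu x)) * ((i == k)%:R * ((x 0 j * y 0 j) * y 0 k))
   + (2^-1 * (- mu / Pm mu x)) * ((i == j)%:R * (y 0 j * (x 0 k * y 0 k)))
   + (2^-1 * (mu ^+ 2 / Pm mu x * x 0 i)) * ((x 0 j * y 0 j) * (x 0 k * y 0 k))))); last first.
  move=> j _; apply: eq_bigr => k _; rewrite christ_abar //.
  rewrite /Pm; field.
  by rewrite -/(Pm mu x) gt_eqF.
rewrite sum2_lin4 sumS1 sumS2 sumS3 dotp_sq.
rewrite sqform_abar /raise ainv_abar //.
rewrite (eq_bigr (fun j => (powR (Pm mu x) (3/2) / Pm mu x * (- mu / (4 * Pm mu x))) * ((i == j)%:R * x 0 j)
   + (powR (Pm mu x) (3/2) / Pm mu x * (- mu / (4 * Pm mu x)) * mu * x 0 i) * (x 0 j * x 0 j))); last first.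
  move=> j _; rewrite !mxE; ring.
rewrite sum_lin2 sum_delta_r -/(dotp x x) -/(sqn x) /thf dotpZl.
rewrite /Pm; field.
by rewrite -/(Pm mu x) !gt_eqF ?powR_gt0.
Qed.

Lemma pd_bbar {R : realType} {n : nat} (lam mu : R) (x : 'rV[R]_n) i j :
  0 < Pm mu x ->
  pd (fun z => bbar lam mu z 0 i) j x =
  lam * (- (5/4) * ((powR (Pm mu x) (5/4))^-1 / Pm mu x) * (mu * (2 * x 0 j))) * x 0 i
  + lam * (powR (Pm mu x) (5/4))^-1 * (i == j)%:R.
Proof.
move=> Px.
have -> : (fun z => bbar lam mu z 0 i) =
   (fun z => lam * powR (Pm mu z) (- (5/4)) * z 0 i).
  by apply/funext => z; rewrite mxE powRN.
have hp := @is_derive_powR_comp _ _ (fun z => Pm mu z) x (evec j) _ (- (5/4)) Px (is_derive_Pm mu x (evec j)).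
apply: pd_of; apply: is_derive_eq.
rewrite ?scE ?dotp_evecr ?dotp_evecl ?evecE powR_m1 // !powRN.
field.
by rewrite !gt_eqF ?powR_gt0.
Qed.

Definition cf {R : realType} {n : nat} (lam mu : R) (z : 'rV[R]_n) : R :=
  lam * (Pm mu z + 1) / 2 * powR (Pm mu z) (3/2) / (powR (Pm mu z) (5/4) * Pm mu z).

Lemma covd_abar {R : realType} {n : nat} (lam mu : R) (x : 'rV[R]_n) i j :
  0 < Pm mu x ->
  covd (abar mu) (bbar lam mu) x i j =
  2 * thf mu x 0 i * bbar lam mu x 0 j + cf lam mu x * abar mu x i j.
Proof.
move=> Px.
rewrite /covd pd_bbar //.
set B := powR (Pm mu x) (5/4).
rewrite (eq_bigr (fun k =>
   (lam / B * 2^-1 * (- mu * (i == j)%:R + mu ^+ 2 / Pm mu x * x 0 i * x 0 j)) * (x 0 k * x 0 k)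
   + (lam / B * 2^-1 * (- mu / Pm mu x * x 0 i)) * ((k == j)%:R * x 0 k)
   + (lam / B * 2^-1 * (- mu / Pm mu x * x 0 j)) * ((k == i)%:R * x 0 k))); last first.
  move=> k _; rewrite christ_abar // mxE -/B.
  rewrite /Pm; field.
  by rewrite -/(Pm mu x) /B !gt_eqF ?powR_gt0.
rewrite sum_lin3 !sum_delta_l -/(dotp x x) -/(sqn x).
rewrite /thf /cf !mxE -/B.
rewrite /Pm; field.
by rewrite -/(Pm mu x) /B !gt_eqF ?powR_gt0.
Qed.

Lemma part4 {R : realType} {n : nat} (lam mu : R) :
  dually_related (@ball_mu R n mu) (abar mu) (bbar lam mu).
Proof.
exists (thf mu), (cf lam mu); split.
  by move=> x /ball_Pm Px y i; rewrite spray_abar.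
by move=> x /ball_Pm Px i j; rewrite covd_abar.
Qed.

Theorem mainTheorem4 (R : realType) (n : nat) (mu lam : R) :
  (* abar is the matrix of alpha_bar on the ball, and is Riemannian there *)
  (forall x : 'rV[R]_n, ball_mu mu x -> forall y : 'rV[R]_n,
      alpha_bar mu x y = Num.sqrt (sqform (abar mu) x y)) /\
  riemannian_on (@ball_mu R n mu) (abar mu) /\
  dually_flat (@ball_mu R n mu) (abar mu) /\
  dually_related (@ball_mu R n mu) (abar mu) (bbar lam mu).
Proof.
split; first exact: part1.
split; first exact: part2.
split; first exact: part3.
exact: part4.
Qed.
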